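(* Assume Condition 1. For all $t\ge1$, $\bar V_t(\pi^* )\le\theta K$ and $\bar V_t(\pi_t)\le\theta K$.
   Context: Contextual bandit setting: $A$ a set of $K$ actions, $X$ contexts, $\Pi$ a finite set of $N$ policies, $D$ a distribution over $(x,\vec r)\in X\times[0,1]^K$ with marginal $D_X$; $(x_t,\vec r_t)\sim D$ i.i.d., the learner observes $x_t$, picks $a_t$, sees only $r_t:=r_t(a_t)$. $\eta_D(\pi)=\mathbb{E}[r(\pi(x))]$, $\pi^*$ a maximizer. $W_P(x,a)=\sum_{\pi:\pi(x)=a}P(\pi)$. With history $((x_i,a_i,r_i,p_i))_{i\le t}$, $\eta_t(W)=\frac1t\sum_i r_iW(x_i,a_i)/p_i$ for randomized policies $W$, $\pi_t=\arg\max_\pi\eta_t(\pi)$, $\Delta_t(W)=\eta_t(\pi_t)-\eta_t(W)$; $\mathbb{E}_{x\sim h_{t-1}}$ is the average over $x_1,\dots,x_{t-1}$. Actions are chosen by RandomizedUCB$(\Pi,\delta,K)$: $C_t=2\log(Nt/\delta)$, $\mu_t=\min\{\frac1{2K},\sqrt{C_t/(2Kt)}\}$; $P_t$ is a distribution over $\Pi$ whose objective $\sum_\pi P(\pi)\Delta_{t-1}(\pi)$ is within $\epsilon_{\mathrm{opt},t}=O(\sqrt{KC_t/t})$ of the optimum of minimizing it subject to: for all distributions $Q$ over $\Pi$, $\mathbb{E}_{\pi\sim Q}\mathbb{E}_{x\sim h_{t-1}}[1/((1-K\mu_t)W_P(x,\pi(x))+\mu_t)]\le\max\{4K,(t-1)\Delta_{t-1}(W_Q)^2/(180C_{t-1})\}$,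 with each constraint satisfied up to additive slack $K$; $W'_t(a)=(1-K\mu_t)W_{P_t}(x_t,a)+\mu_t$, $a_t\sim W'_t$, $p_t=W'_t(a_t)$. Constants: $\epsilon\in(0,1)$ fixed, $\rho=7500/\epsilon^3$, $\theta=(\rho+1)/(1-(1+\epsilon)/2)$. $t_0$ is the first $t$ with $\mu_t=\sqrt{C_t/(2Kt)}$; $t_1=\lceil16K\log(8KN/\delta)\rceil$. $V_t(\pi)=K$ for $t\le t_0$ and $V_t(\pi)=K+\mathbb{E}_{x\sim D_X}[1/((1-K\mu_t)W_{P_t}(x,\pi(x))+\mu_t)]$ for $t>t_0$; $\bar V_t(\pi)=\max_{\tau\le t}V_\tau(\pi)$. Condition 1: (i) for all $\pi\in\Pi$ and $t\ge t_1$, $\mathbb{E}_{x\sim D_X}[1/((1-K\mu_t)W_{P_t}(x,\pi(x))+\mu_t)]\le(1+\epsilon)\mathbb{E}_{x\sim h_{t-1}}[1/((1-K\mu_t)W_{P_t}(x,\pi(x))+\mu_t)]+\rho K$; and (ii) for all $\pi,\pi'\in\Pi$ and $t\ge t_0$, $|(\eta_t(\pi)-\eta_t(\pi'))-(\eta_D(\pi)-\eta_D(\pi'))|\le2\sqrt{(\bar V_t(\pi)+\bar V_t(\pi'))C_t/t}$. *)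

(* Defs.v *)
From HB Require Import structures.
From mathcomp Require Import all_boot all_order all_algebra.
From mathcomp Require Import all_classical all_reals all_analysis.
Set Implicit Arguments. Unset Strict Implicit. Unset Printing Implicit Defensive.
Import Order.TTheory GRing.Theory Num.Theory.
Local Open Scope ring_scope.

(* Setting: actions = finite type A (K = #|A|), policies = finite type Pi
   (N = #|Pi|), each policy p acts through [pol p : X -> A].
   Randomized policies are maps W : X -> A -> R. *)

Definition Kn (R : realType) (A : finType) : R := #|A|%:R.
Definition Nn (R : realType) (Pi : finType) : R := #|Pi|%:R.

Definition isDist (R : realType) (Pi : finType) (P : {ffun Pi -> R}) : Prop :=
  (forall p, 0 <= P p) /\ \sum_p P p = 1.

Definition WP (R : realType) (X : Type) (A Pi : finType) (pol : Pi -> X -> A)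
  (P : {ffun Pi -> R}) (x : X) (a : A) : R :=
  \sum_(p | pol p x == a) P p.

(* deterministic policy seen as a randomized one *)
Definition polW (R : realType) (X : Type) (A Pi : finType) (pol : Pi -> X -> A)
  (p : Pi) : X -> A -> R := fun x b => (pol p x == b)%:R.

Definition Ct (R : realType) (Pi : finType) (delta : R) (t : nat) : R :=
  2 * ln (Nn R Pi * t%:R / delta).

Definition sqt (R : realType) (A Pi : finType) (delta : R) (t : nat) : R :=
  Num.sqrt (Ct Pi delta t / (2 * Kn R A * t%:R)).

Definition mut (R : realType) (A Pi : finType) (delta : R) (t : nat) : R :=
  Num.min (2 * Kn R A)^-1 (sqt A Pi delta t).

Definition Wprime (R : realType) (X : Type) (A Pi : finType) (pol : Pi -> X -> A)
  (delta : R) (P : {ffun Pi -> R}) (t : nat) (x : X) (a : A) : R :=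
  (1 - Kn R A * mut A Pi delta t) * WP pol P x a + mut A Pi delta t.

(* History: contexts x_i, reward vectors rv_i, actions a_i, distributions P_i
   (i = 1, 2, ...; index 0 unused).  p_i = W'_i(a_i). *)
Definition prob (R : realType) (X : Type) (A Pi : finType) (pol : Pi -> X -> A)
  (delta : R) (x : nat -> X) (a : nat -> A) (P : nat -> {ffun Pi -> R}) (i : nat) : R :=
  Wprime pol delta (P i) i (x i) (a i).

Definition eta (R : realType) (X : Type) (A Pi : finType) (pol : Pi -> X -> A)
  (delta : R) (x : nat -> X) (rv : nat -> A -> R) (a : nat -> A)
  (P : nat -> {ffun Pi -> R}) (t : nat) (W : X -> A -> R) : R :=
  t%:R^-1 * \sum_(1 <= i < t.+1)
     rv i (a i) * W (x i) (a i) / prob pol delta x a P i.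

Definition Eh (R : realType) (X : Type) (x : nat -> X) (t : nat) (f : X -> R) : R :=
  t%:R^-1 * \sum_(1 <= i < t.+1) f (x i).

Definition Delta (R : realType) (X : Type) (A Pi : finType) (pol : Pi -> X -> A)
  (delta : R) (x : nat -> X) (rv : nat -> A -> R) (a : nat -> A)
  (P : nat -> {ffun Pi -> R}) (pit : nat -> Pi) (t : nat) (W : X -> A -> R) : R :=
  eta pol delta x rv a P t (polW R pol (pit t)) - eta pol delta x rv a P t W.

(* The constraint of RandomizedUCB at round t for candidate Pc, with additive slack *)
Definition feasible (R : realType) (X : Type) (A Pi : finType) (pol : Pi -> X -> A)
  (delta : R) (x : nat -> X) (rv : nat -> A -> R) (a : nat -> A)
  (P : nat -> {ffun Pi -> R}) (pit : nat -> Pi) (t : nat) (slack : R)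
  (Pc : {ffun Pi -> R}) : Prop :=
  forall Q : {ffun Pi -> R}, isDist Q ->
    \sum_p Q p * Eh x t.-1 (fun y => (Wprime pol delta Pc t y (pol p y))^-1)
    <= Num.max (4 * Kn R A)
         (t.-1%:R * (Delta pol delta x rv a P pit t.-1 (WP pol Q)) ^+ 2
            / (180 * Ct Pi delta t.-1))
       + slack.

Definition objective (R : realType) (X : Type) (A Pi : finType) (pol : Pi -> X -> A)
  (delta : R) (x : nat -> X) (rv : nat -> A -> R) (a : nat -> A)
  (P : nat -> {ffun Pi -> R}) (pit : nat -> Pi) (t : nat) (Pc : {ffun Pi -> R}) : R :=
  \sum_p Pc p * Delta pol delta x rv a P pit t.-1 (polW R pol p).

(* The P_t are chosen by RandomizedUCB(Pi, delta, K): for every round t >= 1,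
   P_t is a distribution satisfying the constraints up to slack K, and its
   objective is within eps_opt,t = c * sqrt(K C_t / t) of the optimum of the
   exactly constrained program (c is the constant hidden in the O(.)). *)
Definition RUCB (R : realType) (X : Type) (A Pi : finType) (pol : Pi -> X -> A)
  (delta : R) (x : nat -> X) (rv : nat -> A -> R) (a : nat -> A)
  (P : nat -> {ffun Pi -> R}) (pit : nat -> Pi) (c : R) : Prop :=
  forall t : nat, (1 <= t)%N ->
    [/\ isDist (P t),
        feasible pol delta x rv a P pit t (Kn R A) (P t) &
        forall P' : {ffun Pi -> R}, isDist P' ->
          feasible pol delta x rv a P pit t 0 P' ->
          objective pol delta x rv a P pit t (P t)
            <= objective pol delta x rv a P pit t P'
               + c * Num.sqrt (Kn R A * Ct Pi delta t / t%:R)].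

Definition is_argmax_hist (R : realType) (X : Type) (A Pi : finType) (pol : Pi -> X -> A)
  (delta : R) (x : nat -> X) (rv : nat -> A -> R) (a : nat -> A)
  (P : nat -> {ffun Pi -> R}) (pit : nat -> Pi) : Prop :=
  forall t p, eta pol delta x rv a P t (polW R pol p)
              <= eta pol delta x rv a P t (polW R pol (pit t)).

(* t0 = first t >= 1 with mu_t = sqrt(C_t/(2Kt)).
   le_t0 t  <-> t <= t0 ;  ge_t0 t <-> t >= t0 *)
Definition le_t0 (R : realType) (A Pi : finType) (delta : R) (t : nat) : Prop :=
  forall s, (0 < s < t)%N -> mut A Pi delta s <> sqt A Pi delta s.
Definition ge_t0 (R : realType) (A Pi : finType) (delta : R) (t : nat) : Prop :=
  exists2 s, (0 < s <= t)%N & mut A Pi delta s = sqt A Pi delta s.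

Definition ge_t1 (R : realType) (A Pi : finType) (delta : R) (t : nat) : Prop :=
  (Num.ceil (16 * Kn R A * ln (8 * Kn R A * Nn R Pi / delta)) <= t%:Z)%R.

(* The data distribution D over X x [0,1]^K is the law of (xD, rD) under the
   probability PD on a sample space Omega. *)
Definition ED (R : realType) (X : Type) (d : measure_display) (Omega : measurableType d)
  (PD : probability Omega R) (xD : Omega -> X) (f : X -> R) : R :=
  fine (\int[PD]_w (f (xD w))%:E).

Definition etaD (R : realType) (X : Type) (A Pi : finType) (pol : Pi -> X -> A)
  (d : measure_display) (Omega : measurableType d)
  (PD : probability Omega R) (xD : Omega -> X) (rD : Omega -> A -> R) (p : Pi) : R :=
  fine (\int[PD]_w (rD w (pol p (xD w)))%:E).

Definition Vt (R : realType) (X : Type) (A Pi : finType) (pol : Pi -> X -> A)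
  (d : measure_display) (Omega : measurableType d)
  (PD : probability Omega R) (xD : Omega -> X)
  (delta : R) (P : nat -> {ffun Pi -> R}) (t : nat) (p : Pi) : R :=
  if `[< le_t0 A Pi delta t >] then Kn R A
  else Kn R A + ED PD xD (fun y => (Wprime pol delta (P t) t y (pol p y))^-1).

Definition Vbar (R : realType) (X : Type) (A Pi : finType) (pol : Pi -> X -> A)
  (d : measure_display) (Omega : measurableType d)
  (PD : probability Omega R) (xD : Omega -> X)
  (delta : R) (P : nat -> {ffun Pi -> R}) (t : nat) (p : Pi) : R :=
  \big[Num.max/0]_(1 <= tau < t.+1) Vt pol PD xD delta P tau p.

Definition rho (R : realType) (eps : R) : R := 7500 / eps ^+ 3.
Definition theta (R : realType) (eps : R) : R := (rho eps + 1) / (1 - (1 + eps) / 2).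

Definition Condition1 (R : realType) (X : Type) (A Pi : finType) (pol : Pi -> X -> A)
  (d : measure_display) (Omega : measurableType d)
  (PD : probability Omega R) (xD : Omega -> X) (rD : Omega -> A -> R)
  (eps delta : R) (x : nat -> X) (rv : nat -> A -> R) (a : nat -> A)
  (P : nat -> {ffun Pi -> R}) : Prop :=
  (forall (p : Pi) (t : nat), ge_t1 A Pi delta t ->
     ED PD xD (fun y => (Wprime pol delta (P t) t y (pol p y))^-1)
     <= (1 + eps) * Eh x t.-1 (fun y => (Wprime pol delta (P t) t y (pol p y))^-1)
        + rho eps * Kn R A)
  /\
  (forall (p p' : Pi) (t : nat), ge_t0 A Pi delta t ->
     `| (eta pol delta x rv a P t (polW R pol p) - eta pol delta x rv a P t (polW R pol p'))
        - (etaD pol PD xD rD p - etaD pol PD xD rD p') |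
     <= 2 * Num.sqrt ((Vbar pol PD xD delta P t p + Vbar pol PD xD delta P t p')
                       * Ct Pi delta t / t%:R)).

(* Main.v *)
Require Import Defs.
From HB Require Import structures.
From mathcomp Require Import all_boot all_order all_algebra.
From mathcomp Require Import all_classical all_reals all_analysis.
From mathcomp Require Import ring lra.
Set Implicit Arguments. Unset Strict Implicit.
Import Order.TTheory GRing.Theory Num.Theory.
Local Open Scope ring_scope.
Local Open Scope classical_set_scope.

Lemma meas_ffun (R : realType) (X : Type) (A Pi : finType) (pol : Pi -> X -> A)
  (d : measure_display) (Omega : measurableType d) (xD : Omega -> X) :
  (forall (p : Pi) (b : A), measurable (xD @^-1` [set y | pol p y = b])) ->
  forall h : {ffun Pi -> A} -> R,
  measurable_fun setT (fun w => h [ffun q => pol q (xD w)]).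
Proof.
move=> mxD h _ B mB.
have -> : [set: Omega] `&` (fun w => h [ffun q => pol q (xD w)]) @^-1` B =
  \bigcup_(f in [set f | B (h f)]) \bigcap_(q in [set: Pi]) (xD @^-1` [set y | pol q y = f q]).
  apply/seteqP; split => w /=.
    move=> [_ Bw]; exists [ffun q => pol q (xD w)] => //= q _; by rewrite ffunE.
  move=> [f Bf Hf]; split => //.
  have -> : [ffun q => pol q (xD w)] = f.
    by apply/ffunP => q; rewrite ffunE; exact: (Hf q I).
  exact: Bf.
apply: fin_bigcup_measurable; first exact: finite_finset.
move=> f _; apply: fin_bigcap_measurable; first exact: finite_finset.
move=> q _; exact: mxD.
Qed.

Lemma ED_le (R : realType) (X : Type) (d : measure_display) (Omega : measurableType d)
  (PD : probability Omega R) (xD : Omega -> X) (f : X -> R) (M : R) :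
  (forall y, 0 <= f y <= M) -> measurable_fun setT (fun w => f (xD w)) ->
  ED PD xD f <= M.
Proof.
move=> hf mf; rewrite /ED.
have h1 : (\int[PD]_w (f (xD w))%:E <= \int[PD]_w (cst M%:E) w)%E.
  apply: ge0_le_integral => //.
  - by move=> w _; rewrite lee_fin; case/andP: (hf (xD w)).
  - exact/measurable_realfun.measurable_EFinP.
  - by move=> w _; rewrite lee_fin; case/andP: (hf (xD w)).
rewrite integral_cst // in h1. have e : forall z : \bar R, z = 1%E -> (M%:E * z = M%:E)%E by move=> z ->; rewrite mule1. rewrite e in h1; last exact: probability_setT.
have h0 : (0 <= \int[PD]_w (f (xD w))%:E)%E.
  by apply: integral_ge0 => w _; rewrite lee_fin; case/andP: (hf (xD w)).
move: h0 h1; case: (\int[PD]_w (f (xD w))%:E)%E => //= [r|]; rewrite ?lee_fin //.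
Qed.

Lemma ED_ge0 (R : realType) (X : Type) (d : measure_display) (Omega : measurableType d)
  (PD : probability Omega R) (xD : Omega -> X) (f : X -> R) :
  (forall y, 0 <= f y) -> 0 <= ED PD xD f.
Proof.
move=> hf; rewrite /ED; apply: fine_ge0; apply: integral_ge0 => w _.
by rewrite lee_fin.
Qed.

Lemma ln_le_sub1 (R : realType) (x : R) : 0 < x -> ln x <= x - 1.
Proof.
move=> x0; have := @le_ln1Dx R (x - 1).
have -> : 1 + (x - 1) = x by ring.
apply; lra.
Qed.

Lemma ln2_ge (R : realType) : 2^-1 <= ln (2 : R).
Proof.
have h := @ln_le_sub1 R 2^-1 ltac:(by []).
rewrite lnV ?posrE // in h.
have -> : (2^-1 : R) = 1 - 2^-1 by field.
by rewrite -(opprB (2^-1 : R) 1) lerNl.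
Qed.

Lemma ln_ge_half (R : realType) (x : R) : 2 <= x -> 2^-1 <= ln x.
Proof.
move=> hx; apply: (le_trans (ln2_ge R)).
by rewrite ler_ln ?posrE // (lt_le_trans _ hx).
Qed.

Lemma ln_ge1 (R : realType) (x : R) : 16 <= x -> 1 <= ln x.
Proof.
move=> hx; have h16 : ln (16 : R) = ln (2 : R) *+ 4.
  by rewrite -lnXn //; congr ln; rewrite -natrX.
have : 1 <= ln (16 : R).
  by rewrite h16; have := ln2_ge R; rewrite -[ln 2 *+ 4]mulr_natr; nra.
move/le_trans; apply.
by rewrite ler_ln ?posrE // (lt_le_trans _ hx).
Qed.

Lemma Ct_mono (R : realType) (Pi : finType) (delta : R) (s t : nat) :
  0 < delta < 1 -> (0 < #|Pi|)%N -> (16 <= s)%N -> (s <= t)%N ->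
  Ct Pi delta t / t%:R <= Ct Pi delta s / s%:R.
Proof.
move=> /andP[d0 d1] hN hs hst.
have N1 : 1 <= Nn R Pi by rewrite /Nn ler1n.
have S16 : (16 : R) <= s%:R by rewrite (ler_nat R 16 s).
have TS : (s%:R : R) <= t%:R by rewrite ler_nat.
have S0 : (0 : R) < s%:R by lra.
have T0 : (0 : R) < t%:R by lra.
set a := Nn R Pi * s%:R / delta.
have ha : s%:R <= a.
  rewrite /a ler_pdivlMr //; nra.
have a0 : 0 < a by lra.
set r := t%:R / (s%:R : R).
have r0 : 0 < r by rewrite /r divr_gt0.
have hra : Nn R Pi * t%:R / delta = a * r.
  by rewrite /a /r; field; rewrite (gt_eqF S0) (gt_eqF d0).
have L1 : 1 <= ln a by apply: ln_ge1; lra.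
have M1 : ln r <= r - 1 by exact: ln_le_sub1.
have rS : r * s%:R = t%:R by rewrite /r; field; rewrite (gt_eqF S0).
rewrite /Ct hra lnM ?posrE // -/a.
rewrite ler_pdivrMr // mulrAC ler_pdivlMr //.
nra.
Qed.

Lemma tau_le (R : realType) (A Pi : finType) (delta : R) (t : nat) :
  0 < delta < 1 -> (0 < #|Pi|)%N -> (0 < #|A|)%N -> (2 <= t)%N ->
  t%:R < 16 * Kn R A * ln (8 * Kn R A * Nn R Pi / delta) ->
  t%:R <= 16 * Kn R A * ln (Nn R Pi * t%:R / delta).
Proof.
move=> /andP[d0 d1] hN hA ht hlt.
have N1 : 1 <= Nn R Pi by rewrite /Nn ler1n.
have K1 : 1 <= Kn R A by rewrite /Kn ler1n.
have T2 : (2 : R) <= t%:R by rewrite (ler_nat R 2 t).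
have hx : 2 <= Nn R Pi * t%:R / delta.
  rewrite ler_pdivlMr //; nra.
case: (lerP (8 * Kn R A) t%:R) => h8.
  apply: (le_trans (ltW hlt)); rewrite ler_pM2l; last lra.
  rewrite ler_ln ?posrE; last 2 first.
  - by apply: divr_gt0 => //; nra.
  - by apply: divr_gt0 => //; nra.
  rewrite ler_pM2r ?invr_gt0 //; nra.
have := ln_ge_half hx; nra.
Qed.

Lemma mut_lb (R : realType) (A Pi : finType) (delta : R) (t : nat) :
  0 < delta < 1 -> (0 < #|Pi|)%N -> (0 < #|A|)%N -> (2 <= t)%N ->
  t%:R < 16 * Kn R A * ln (8 * Kn R A * Nn R Pi / delta) ->
  (4 * Kn R A)^-1 <= mut A Pi delta t.
Proof.
move=> hd hN hA ht hlt.
have K1 : 1 <= Kn R A by rewrite /Kn ler1n.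
have T2 : (2 : R) <= t%:R by rewrite (ler_nat R 2 t).
have hle := tau_le hd hN hA ht hlt.
rewrite /mut le_min; apply/andP; split.
  rewrite lef_pV2 ?posrE; lra.
rewrite /sqt /Ct.
have -> : (4 * Kn R A)^-1 = Num.sqrt (((4 * Kn R A)^-1) ^+ 2).
  by rewrite sqrtr_sqr ger0_norm // invr_ge0; lra.
rewrite ler_sqrt; last first.
  apply: divr_ge0; last nra.
  case/andP: hd => d0 d1.
  have N1 : 1 <= Nn R Pi by rewrite /Nn ler1n.
  have hx : 2 <= Nn R Pi * t%:R / delta by rewrite ler_pdivlMr //; nra.
  have := ln_ge_half hx; lra.
rewrite ler_pdivlMr; last nra.
have -> : (4 * Kn R A)^-1 ^+ 2 * (2 * Kn R A * t%:R) = t%:R / (8 * Kn R A).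
  by field; apply/lt0r_neq0; lra.
rewrite ler_pdivrMr; last lra.
nra.
Qed.

Lemma ln_ge32 (R : realType) (x : R) : 8 <= x -> 3/2 <= ln x.
Proof.
move=> hx; have h8 : ln (8 : R) = ln (2 : R) *+ 3.
  by rewrite -lnXn //; congr ln; rewrite -natrX.
have : 3/2 <= ln (8 : R).
  by rewrite h8; have := ln2_ge R; rewrite -[ln 2 *+ 3]mulr_natr; nra.
move/le_trans; apply.
by rewrite ler_ln ?posrE // (lt_le_trans _ hx).
Qed.

Lemma sq_bound (R : realType) (s C B k D : R) :
  0 < s -> 0 < C -> 0 <= B -> 0 <= k -> 0 <= D -> D <= k * Num.sqrt (B * C / s) ->
  s * D ^+ 2 / (180 * C) <= k ^+ 2 * B / 180.
Proof.
move=> s0 C0 B0 k0 D0 hD.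
have hBC : 0 <= B * C / s by apply: divr_ge0 => //; nra.
have hD2 : D ^+ 2 <= k ^+ 2 * (B * C / s).
  have := sqr_sqrtr hBC.
  have hs := sqrtr_ge0 (B * C / s).
  move=> e; rewrite -e; nra.
rewrite ler_pdivrMr; last lra.
have -> : k ^+ 2 * B / 180 * (180 * C) = s * (k ^+ 2 * (B * C / s)).
  by field; rewrite (gt_eqF s0).
by rewrite ler_pM2l.
Qed.

Lemma pt_sum (R : realType) (Pi : finType) (p : Pi) (F : Pi -> R) :
  \sum_q [ffun q' => ((q' == p)%:R : R)] q * F q = F p.
Proof.
rewrite (bigD1 p) //= ffunE eqxx mul1r big1 ?addr0 // => q hq.
by rewrite ffunE (negbTE hq) mul0r.
Qed.

Lemma pt_dist (R : realType) (Pi : finType) (p : Pi) :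
  isDist [ffun q' => ((q' == p)%:R : R)].
Proof.
split; first by move=> q; rewrite ffunE ler0n.
have := pt_sum p (fun _ => (1 : R)); under eq_bigr do rewrite mulr1; done.
Qed.

Lemma pt_WP (R : realType) (X : Type) (A Pi : finType) (pol : Pi -> X -> A) (p : Pi) :
  WP pol [ffun q' => ((q' == p)%:R : R)] = polW R pol p.
Proof.
apply/funext => y; apply/funext => b; rewrite /WP /polW.
rewrite big_mkcond /=.
rewrite (bigD1 p) //= ffunE eqxx big1 ?addr0 //.
  by case: ifP.
by move=> q hq; rewrite ffunE (negbTE hq); case: ifP.
Qed.

Lemma rho_ge (R : realType) (eps : R) : 0 < eps < 1 -> 7500 <= rho eps.
Proof.
case/andP=> e0 e1; rewrite /rho ler_pdivlMr; last exact: exprn_gt0.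
have : eps ^+ 3 <= 1 by rewrite exprn_ile1 // ltW.
lra.
Qed.

Lemma theta_ge (R : realType) (eps : R) : 0 < eps < 1 -> 2 * (rho eps + 1) <= theta eps.
Proof.
move=> he; have := rho_ge he; case/andP: he => e0 e1 hr.
rewrite /theta ler_pdivlMr; last lra.
nra.
Qed.

Lemma Ct_pos (R : realType) (Pi : finType) (delta : R) (s : nat) :
  0 < delta < 1 -> (0 < #|Pi|)%N -> (1 <= s)%N -> 0 < Ct Pi delta s.
Proof.
case/andP=> d0 d1 hN hs; rewrite /Ct; apply: mulr_gt0 => //; apply: ln_gt0.
have N1 : 1 <= Nn R Pi by rewrite /Nn ler1n.
have S1 : (1 : R) <= s%:R by rewrite ler1n.
rewrite ltr_pdivlMr //; nra.
Qed.

Lemma mut_pos (R : realType) (A Pi : finType) (delta : R) (s : nat) :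
  0 < delta < 1 -> (0 < #|Pi|)%N -> (0 < #|A|)%N -> (1 <= s)%N -> 0 < mut A Pi delta s.
Proof.
move=> hd hN hA hs.
have K1 : 1 <= Kn R A by rewrite /Kn ler1n.
rewrite /mut lt_min; apply/andP; split.
  by rewrite invr_gt0; lra.
rewrite /sqt sqrtr_gt0; apply: divr_gt0; first exact: Ct_pos.
have S1 : (1 : R) <= s%:R by rewrite ler1n.
nra.
Qed.

Lemma muK_le (R : realType) (A Pi : finType) (delta : R) (s : nat) :
  (0 < #|A|)%N -> Kn R A * mut A Pi delta s <= 2^-1.
Proof.
move=> hA; have K1 : 1 <= Kn R A by rewrite /Kn ler1n.
rewrite /mut.
have h : Num.min (2 * Kn R A)^-1 (sqt A Pi delta s) <= (2 * Kn R A)^-1 by rewrite ge_min lexx.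
have -> : (2^-1 : R) = Kn R A * (2 * Kn R A)^-1 by field; apply/lt0r_neq0; lra.
by rewrite ler_pM2l //; lra.
Qed.

Lemma Wlb (R : realType) (X : Type) (A Pi : finType) (pol : Pi -> X -> A)
  (delta : R) (Q : {ffun Pi -> R}) (s : nat) y b :
  (0 < #|A|)%N -> isDist Q -> mut A Pi delta s <= Wprime pol delta Q s y b.
Proof.
move=> hA [hQ _]; rewrite /Wprime.
have hW : 0 <= WP pol Q y b by apply: sumr_ge0 => q _.
have := muK_le Pi delta s hA.
set m := mut A Pi delta s; set K := Kn R A; set W := WP pol Q y b.
move=> h; have : 0 <= (1 - K * m) * W by apply: mulr_ge0 => //; lra.
lra.
Qed.

Lemma arith_VB (R : realType) (K E ED g eps rh : R) :
  0 <= K -> 0 <= g -> 0 < eps < 1 ->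
  E <= Num.max (4 * K) g + K -> ED <= (1 + eps) * E + rh * K ->
  K + ED <= (11 + rh) * K + 2 * g.
Proof.
move=> K0 g0 /andP[e0 e1] hF hC.
have hmax : Num.max (4 * K) g <= 4 * K + g by rewrite ge_max; apply/andP; split; lra.
have h2 : (1 + eps) * E <= (1 + eps) * (4 * K + g + K) by rewrite ler_wpM2l; lra.
have h3 : (1 + eps) * (4 * K + g + K) <= 2 * (4 * K + g + K) by rewrite ler_wpM2r; lra.
lra.
Qed.

Lemma not_t1 (R : realType) (A Pi : finType) (delta : R) s : ~ ge_t1 A Pi delta s ->
  s%:R < 16 * Kn R A * ln (8 * Kn R A * Nn R Pi / delta).
Proof.
move=> h1; rewrite /ge_t1 ceil_le_int in h1.
by move/negP: h1; rewrite -ltNge pmulrn.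
Qed.

Lemma yes_t1 (R : realType) (A Pi : finType) (delta : R) s : ge_t1 A Pi delta s ->
  16 * Kn R A * ln (8 * Kn R A * Nn R Pi / delta) <= s%:R.
Proof. by rewrite /ge_t1 ceil_le_int pmulrn. Qed.

Lemma fin_star (R : realType) (K th rh V : R) :
  0 <= K -> 7500 <= rh -> 2 * (rh + 1) <= th ->
  V <= (11 + rh) * K + 2 * (2 ^+ 2 * (th * K + th * K) / 180) -> V <= th * K.
Proof.
move=> K0 hr ht hV.
have : (11 + rh) * K <= (41/45 * th) * K by apply: ler_wpM2r => //; lra.
lra.
Qed.

Lemma fin_t (R : realType) (K th rh v : R) :
  0 <= K -> 7500 <= rh -> 2 * (rh + 1) <= th ->
  v <= (11 + rh) * K + 2 * (4 ^+ 2 * (th * K + v) / 180) -> v <= th * K.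
Proof.
move=> K0 hr ht hV.
have : (11 + rh) * K <= (29/45 * th) * K by apply: ler_wpM2r => //; lra.
lra.
Qed.

Lemma t1_big (R : realType) (A Pi : finType) (delta : R) s :
  0 < delta < 1 -> (0 < #|Pi|)%N -> (0 < #|A|)%N -> ge_t1 A Pi delta s -> (17 <= s)%N.
Proof.
move=> /andP[d0 d1] hN hA /yes_t1 h.
have K1 : 1 <= Kn R A by rewrite /Kn ler1n.
have N1 : 1 <= Nn R Pi by rewrite /Nn ler1n.
have h8 : 8 <= 8 * Kn R A * Nn R Pi / delta by rewrite ler_pdivlMr //; nra.
have := ln_ge32 h8 => hl.
have : (17 : R) <= s%:R by nra.
by rewrite (ler_nat R 17 s).
Qed.

Lemma ge_t0_mono (R : realType) (A Pi : finType) (delta : R) s t :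
  (s <= t)%N -> ge_t0 A Pi delta s -> ge_t0 A Pi delta t.
Proof.
move=> st [u /andP[u0 us] he]; exists u => //.
by rewrite u0 (leq_trans us st).
Qed.

Lemma sqrt_mono2 (R : realType) (a b C s C' s' : R) :
  0 <= b -> a <= b -> 0 <= C / s -> C / s <= C' / s' ->
  Num.sqrt (a * C / s) <= Num.sqrt (b * C' / s').
Proof.
move=> b0 ab h0 h1; apply: ler_wsqrtr; rewrite -!mulrA.
set u := C / s in h0 h1 *; set w := C' / s' in h1 *.
nra.
Qed.

Unset Implicit Arguments.

Theorem lemma13 (R : realType) (X : Type) (A Pi : finType) (pol : Pi -> X -> A)
  (d : measure_display) (Omega : measurableType d) (PD : probability Omega R)
  (xD : Omega -> X) (rD : Omega -> A -> R)
  (eps delta c : R) (x : nat -> X) (rv : nat -> A -> R) (a : nat -> A)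
  (P : nat -> {ffun Pi -> R}) (pit : nat -> Pi) (pistar : Pi) :
  (forall (p : Pi) (b : A), measurable (xD @^-1` [set y | pol p y = b])) ->
  (forall b : A, measurable_fun setT (fun w => rD w b)) ->
  (forall w b, 0 <= rD w b <= 1) ->
  (forall i b, 0 <= rv i b <= 1) ->
  0 < delta < 1 ->
  0 < eps < 1 ->
  RUCB pol delta x rv a P pit c ->
  is_argmax_hist pol delta x rv a P pit ->
  (forall p : Pi, etaD pol PD xD rD p <= etaD pol PD xD rD pistar) ->
  Condition1 pol PD xD rD eps delta x rv a P ->
  forall t : nat, (1 <= t)%N ->
    Vbar pol PD xD delta P t pistar <= theta eps * Kn R A /\
    Vbar pol PD xD delta P t (pit t) <= theta eps * Kn R A.
Proof.
move=> mxD mrD hrD hrv hd heps hR harg hstar [C1 C2].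
have hPi : (0 < #|Pi|)%N by apply/card_gt0P; exists pistar.
have [w0 _] : exists w : Omega, True.
  case: (pselect (exists w : Omega, True)) => // hno; exfalso.
  have hT : [set: Omega] = set0.
    by apply/seteqP; split => w // _; apply: hno; exists w.
  have h1 := probability_setT PD; rewrite hT measure0 in h1.
  by have := congr1 fine h1 => /= /eqP; rewrite eq_sym oner_eq0.
have hA : (0 < #|A|)%N by apply/card_gt0P; exists (pol pistar (xD w0)).
have K1 : 1 <= Kn R A by rewrite /Kn ler1n.
have rho7500 := rho_ge heps.
have th2 := theta_ge heps.
have Cpos : forall s, (1 <= s)%N -> 0 < Ct Pi delta s by move=> s; exact: Ct_pos.
have mupos : forall s, (1 <= s)%N -> 0 < mut A Pi delta s by move=> s; exact: mut_pos.
have dist : forall s, (1 <= s)%N -> isDist (P s) by move=> s hs; case: (hR s hs).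
pose gfun s p := s.-1%:R * (Delta pol delta x rv a P pit s.-1 (polW R pol p)) ^+ 2
    / (180 * Ct Pi delta s.-1).
have feas : forall s p, (1 <= s)%N ->
    Eh x s.-1 (fun y => (Wprime pol delta (P s) s y (pol p y))^-1)
    <= Num.max (4 * Kn R A) (gfun s p) + Kn R A.
  move=> s p hs; case: (hR s hs) => _ hf _.
  have := hf _ (pt_dist R p); rewrite pt_sum pt_WP; exact.
have notle : forall s, ~ le_t0 A Pi delta s -> (2 <= s)%N /\ ge_t0 A Pi delta s.-1.
  move=> s hs; case: (pselect (ge_t0 A Pi delta s.-1)) => hg.
    split => //; case: hg => u0 /andP[hu0 hus] _.
    by case: s hs hus => [|[|s]] //= hs hus; move: (leq_trans hu0 hus).
  exfalso; apply: hs => u1 /andP[hu0 hus] he; apply: hg; exists u1 => //.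
  by rewrite hu0 /=; case: s hus {he} => [|s] //=.
have Dge0 : forall s p, 0 <= Delta pol delta x rv a P pit s (polW R pol p).
  by move=> s p; rewrite /Delta subr_ge0; exact: harg.

have VB : forall s p, (1 <= s)%N ->
    Vt pol PD xD delta P s p <= 5 * Kn R A \/
    [/\ ~ le_t0 A Pi delta s, ge_t1 A Pi delta s &
        Vt pol PD xD delta P s p <= (11 + rho eps) * Kn R A + 2 * gfun s p].
  move=> s p hs; rewrite /Vt; case: (pselect (le_t0 A Pi delta s)) => hle.
    by rewrite asboolT //; left; clear -K1; lra.
  rewrite asboolF //; have [s2 hg0] := notle s hle.
  case: (pselect (ge_t1 A Pi delta s)) => h1.
    right; split => //.
    have g0 : 0 <= gfun s p.
      rewrite /gfun; apply: divr_ge0.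
        by apply: mulr_ge0 => //; exact: sqr_ge0.
      have s1 : (1 <= s.-1)%N by case: s s2 {hs hle hg0 h1} => [|[|s]].
      by apply: mulr_ge0 => //; apply: ltW; apply: Cpos.
    have hF := feas s p hs. have hC := C1 p s h1.
    have K0 : 0 <= Kn R A by clear -K1; lra.
    exact: (arith_VB K0 g0 heps hF hC).
  left.
  have hlt := not_t1 h1.
  have hmu := mut_lb hd hPi hA s2 hlt.
  have hb : forall y, 0 <= (Wprime pol delta (P s) s y (pol p y))^-1 <= 4 * Kn R A.
    move=> y; have hW := Wlb pol delta s y (pol p y) hA (dist s hs).
    have hW0 : 0 < Wprime pol delta (P s) s y (pol p y) by exact: lt_le_trans (mupos s hs) hW.
    rewrite invr_ge0 (ltW hW0) /= -[4 * Kn R A]invrK lef_pV2 ?posrE ?invr_gt0 //;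
      first [exact: (le_trans hmu hW) | (clear -K1; lra)].
  have hm : measurable_fun setT
      (fun w => (Wprime pol delta (P s) s (xD w) (pol p (xD w)))^-1).
    have := meas_ffun (R:=R) mxD (fun phi : {ffun Pi -> A} =>
      ((1 - Kn R A * mut A Pi delta s) * (\sum_(q | phi q == phi p) P s q)
        + mut A Pi delta s)^-1).
    congr measurable_fun; apply/funext => w; rewrite /Wprime /WP.
    congr (_ ^-1); congr (_ * _ + _); apply: eq_bigl => q; rewrite !ffunE //.
  have := ED_le PD hb hm; move=> h; clear -h; lra.

have Vin : forall s t p, (1 <= s)%N -> (s <= t)%N ->
    Vt pol PD xD delta P s p <= Vbar pol PD xD delta P t p.
  move=> s t p h1 h2; rewrite /Vbar.
  apply: (@le_bigmax_seq _ _ _ _ _ s xpredT) => //.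
  by rewrite mem_index_iota h1 ltnS.
have Vmono : forall s t p, (s <= t)%N ->
    Vbar pol PD xD delta P s p <= Vbar pol PD xD delta P t p.
  move=> s t p h; rewrite /Vbar; exact: (@le_bigmax_nat _ _ _ _ _ _ _ xpredT).
have Vle : forall t p B, 0 <= B ->
    (forall s, (1 <= s)%N -> (s <= t)%N -> Vt pol PD xD delta P s p <= B) ->
    Vbar pol PD xD delta P t p <= B.
  move=> t p B B0 hB; rewrite /Vbar big_seq; apply: bigmax_le => // i.
  by rewrite mem_index_iota => /andP[i1 i2]; apply: hB.
have D1 : forall s (p q : Pi), ge_t0 A Pi delta s ->
    Defs.eta pol delta x rv a P s (polW R pol q) - Defs.eta pol delta x rv a P s (polW R pol p)
    <= etaD pol PD xD rD q - etaD pol PD xD rD p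
       + 2 * Num.sqrt ((Vbar pol PD xD delta P s q + Vbar pol PD xD delta P s p)
                       * Ct Pi delta s / s%:R).
  move=> s p q hg; have := C2 q p s hg; rewrite ler_norml => /andP[h1 h2]; clear -h1 h2; lra.
have D1' : forall s (p q : Pi), ge_t0 A Pi delta s ->
    etaD pol PD xD rD q - etaD pol PD xD rD p
    <= Defs.eta pol delta x rv a P s (polW R pol q) - Defs.eta pol delta x rv a P s (polW R pol p)
       + 2 * Num.sqrt ((Vbar pol PD xD delta P s q + Vbar pol PD xD delta P s p)
                       * Ct Pi delta s / s%:R).
  move=> s p q hg; have := C2 q p s hg; rewrite ler_norml => /andP[h1 h2]; clear -h1 h2; lra.

have K0 : 0 <= Kn R A by clear -K1; lra.
have th0 : 0 <= theta eps * Kn R A.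
  by apply: mulr_ge0 => //; clear -th2 rho7500; lra.
have Vt0 : forall s p, (1 <= s)%N -> 0 <= Vt pol PD xD delta P s p.
  move=> s p hs; rewrite /Vt; case: (pselect (le_t0 A Pi delta s)) => hle.
    by rewrite asboolT.
  rewrite asboolF //; apply: addr_ge0 => //; apply: ED_ge0 => y.
  rewrite invr_ge0; apply: ltW.
  exact: lt_le_trans (mupos s hs) (Wlb pol delta s y (pol p y) hA (dist s hs)).
suff H : forall t, Vbar pol PD xD delta P t pistar <= theta eps * Kn R A /\
                   Vbar pol PD xD delta P t (pit t) <= theta eps * Kn R A.
  by move=> t _; exact: H.
elim/ltn_ind => t IH.
case: (posnP t) => [-> | tpos].
  by rewrite /Vbar !big_geq //; split; exact: th0.
have hAt : Vbar pol PD xD delta P t pistar <= theta eps * Kn R A.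
  apply: Vle => // s s1 st.
  case: (ltnP s t) => hst.
    have st' : (s <= t.-1)%N by rewrite -ltnS prednK.
    have [IHa _] := IH t.-1 ltac:(by rewrite prednK).
    exact: le_trans (Vin s t.-1 pistar s1 st') IHa.
  have e : s = t by apply/eqP; rewrite eqn_leq st hst.
  rewrite e.
  case: (VB t pistar tpos) => [h5 | [hle hg1 hV]].
    apply: (le_trans h5); apply: ler_wpM2r => //; clear -th2 rho7500; lra.
  have [t2 hg0] := notle t hle.
  have s01 : (1 <= t.-1)%N by case: t t2 {IH tpos st hst e hle hg1 hV hg0} => [|[|t]].
  have [IHa IHb] := IH t.-1 ltac:(by rewrite prednK).
  have hD : Delta pol delta x rv a P pit t.-1 (polW R pol pistar)
      <= 2 * Num.sqrt ((theta eps * Kn R A + theta eps * Kn R A)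
                       * Ct Pi delta t.-1 / t.-1%:R).
    have h1 := D1 t.-1 pistar (pit t.-1) hg0.
    have h2 := hstar (pit t.-1).
    have h3 : Num.sqrt ((Vbar pol PD xD delta P t.-1 (pit t.-1) +
                         Vbar pol PD xD delta P t.-1 pistar) * Ct Pi delta t.-1 / t.-1%:R)
      <= Num.sqrt ((theta eps * Kn R A + theta eps * Kn R A)
                       * Ct Pi delta t.-1 / t.-1%:R).
      apply: sqrt_mono2 => //.
      - by clear -th0; lra.
      - by clear -IHa IHb; lra.
      - by apply: divr_ge0 => //; apply: ltW; apply: Cpos.
    rewrite /Delta; clear -h1 h2 h3; lra.
  have hg : gfun t pistar <= 2 ^+ 2 * (theta eps * Kn R A + theta eps * Kn R A) / 180.
    apply: sq_bound => //.
    - by rewrite ltr0n.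
    - exact: Cpos.
    - by clear -th0; lra.
  apply: (fin_star K0 rho7500 th2).
  apply: (le_trans hV); clear -hg; lra.
split => //.
set v := Vbar pol PD xD delta P t (pit t).
have v0 : 0 <= v := le_trans (Vt0 t (pit t) tpos) (Vin t t (pit t) tpos (leqnn t)).
apply: (fin_t K0 rho7500 th2).
apply: Vle.
  apply: addr_ge0; first by apply: mulr_ge0 => //; clear -rho7500; lra.
  by apply: mulr_ge0 => //; apply: divr_ge0 => //; apply: mulr_ge0 => //; apply: addr_ge0.
move=> s s1 st.
case: (VB s (pit t) s1) => [h5 | [hle hg1 hV]].
  apply: (le_trans h5).
  have : 0 <= 2 * (4 ^+ 2 * (theta eps * Kn R A + v) / 180).
    by apply: mulr_ge0 => //; apply: divr_ge0 => //; apply: mulr_ge0 => //; apply: addr_ge0.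
  have : 5 * Kn R A <= 11 * Kn R A by apply: ler_wpM2r => //; rewrite ler_nat.
  have : 0 <= rho eps * Kn R A by apply: mulr_ge0 => //; clear -rho7500; lra.
  move=> h1 h2 h3; clear -h1 h2 h3; lra.
have [s2 hg0] := notle s hle.
have s17 := t1_big hd hPi hA hg1.
have s016 : (16 <= s.-1)%N by case: s s17 {s1 st hle hg1 hV s2 hg0} => [|s].
have s01 : (1 <= s.-1)%N by apply: leq_trans s016.
have s0t : (s.-1 < t)%N by apply: leq_trans st; rewrite prednK // (leq_trans _ s2).
have [IHa IHb] := IH s.-1 s0t.
have hgt := ge_t0_mono (ltnW s0t) hg0.
have hw := Ct_mono hd hPi s016 (ltnW s0t).
have h1 := D1 s.-1 (pit t) (pit s.-1) hg0.
have h2 := D1' t (pit t) pistar hgt.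
have h3 := harg t pistar.
have h4 := hstar (pit s.-1).
have hvm : Vbar pol PD xD delta P s.-1 (pit t) <= v by apply: Vmono; exact: ltnW.
have sq1 : Num.sqrt ((Vbar pol PD xD delta P s.-1 (pit s.-1) +
                      Vbar pol PD xD delta P s.-1 (pit t)) * Ct Pi delta s.-1 / s.-1%:R)
    <= Num.sqrt ((theta eps * Kn R A + v) * Ct Pi delta s.-1 / s.-1%:R).
  apply: sqrt_mono2 => //.
  - by clear -th0 v0; lra.
  - by clear -IHb hvm; lra.
  - by apply: divr_ge0 => //; apply: ltW; apply: Cpos.
have sq2 : Num.sqrt ((Vbar pol PD xD delta P t pistar + v) * Ct Pi delta t / t%:R)
    <= Num.sqrt ((theta eps * Kn R A + v) * Ct Pi delta s.-1 / s.-1%:R).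
  apply: sqrt_mono2 => //.
  - by clear -th0 v0; lra.
  - by clear -hAt; lra.
  - by apply: divr_ge0 => //; apply: ltW; apply: Cpos.
have hD : Delta pol delta x rv a P pit s.-1 (polW R pol (pit t))
    <= 4 * Num.sqrt ((theta eps * Kn R A + v) * Ct Pi delta s.-1 / s.-1%:R).
  rewrite /Delta; clear -h1 h2 h3 h4 sq1 sq2; lra.
have hg : gfun s (pit t) <= 4 ^+ 2 * (theta eps * Kn R A + v) / 180.
  apply: sq_bound => //.
  - by rewrite ltr0n.
  - exact: Cpos.
  - by clear -th0 v0; lra.
apply: (le_trans hV); clear -hg; lra.
Qed.
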